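(* Let $\ell\ge2$, $R_0^*\in SO(3)$, $(y_i,x_i)$ with $y_i=R_0^*x_i+\epsilon_i$ ($i=1,\dots,\ell$), $c_1^2,\dots,c_\ell^2\ge0$, and $\hat w_0\in\mathbb{S}^3$ a global minimizer of (TLS-Q). Let $\zeta=\lambda_{\min2}(\sum_{i=1}^\ell Q_i)/\lambda_{\min}(\sum_{i=1}^\ell Q_i)$ and assume $\zeta\ge\ell/(\ell-1)$ and, for every $i$, $$c_i^2>\hat w_0^\top Q_i\hat w_0+\|Q_i\hat w_0\|_2+\frac{|d_i|+d_i}{2},\quad d_i:=\frac{\sum_{k=1}^\ell\hat w_0^\top Q_k\hat w_0}{\ell}-\hat w_0^\top Q_i\hat w_0+\frac{\lambda_{\max}\big(\sum_{j\ne i}(Q_i-Q_j)\big)}{\zeta(\ell-1)}.$$ Let $\hat V_0\in\mathbb{R}^{4\times3}$ satisfy $\hat V_0^\top\hat w_0=0$, $\hat V_0^\top\hat V_0=I_3$, and $\hat V=[\hat V_0,\ \hat w_0]\in\mathbb{R}^{4\times4}$. Define $$\hat T_i:=\frac{\zeta-\frac{\ell}{\ell-1}}{\zeta}\hat V_0^\top Q_i\hat V_0+\frac{\sum_{j=1}^\ell\hat V_0^\top Q_j\hat V_0}{\zeta(\ell-1)}-\frac{\sum_{k=1}^\ell\hat w_0^\top Q_k\hat w_0}{\ell}I_3,\qquad \hat S_i:=\hat V\begin{bmatrix}\hat T_i&0\\0&0\end{bmatrix}\hat V^\top .$$ Then $\sum_{i=1}^\ell\hat S_i=\sum_{i=1}^\ell\big(Q_i-(\hat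 w_0^\top Q_i\hat w_0)I_4\big)$, $\hat S_i\succeq0$ for every $i$, and $\hat S_i+c_i^2I_4-Q_i\succ0$ for every $i$.
   Context: For $w=[w_1;w_2;w_3;w_4]\in\mathbb{S}^3$, $R(w)=\begin{bmatrix} w_1^2+w_2^2-w_3^2-w_4^2 & 2(w_2w_3-w_1w_4) & 2(w_2w_4+w_1w_3)\\ 2(w_2w_3+w_1w_4) & w_1^2+w_3^2-w_2^2-w_4^2 & 2(w_3w_4-w_1w_2)\\ 2(w_2w_4-w_1w_3) & 2(w_3w_4+w_1w_2) & w_1^2+w_4^2-w_2^2-w_3^2\end{bmatrix}\in SO(3)$. $Q_i$ is the unique symmetric $4\times4$ matrix with $w^\top Q_iw=\|y_i-R(w)x_i\|_2^2$ for all $w\in\mathbb{S}^3$. (TLS-Q) is $\min_{w_0\in\mathbb{S}^3}\sum_{i=1}^\ell\min\{w_0^\top Q_iw_0,c_i^2\}$. $\lambda_{\min},\lambda_{\min2},\lambda_{\max}$ denote smallest, second smallest (with multiplicity), largest eigenvalue. *)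

(* Defs.v *)
From Stdlib Require Import ClassicalEpsilon.
From mathcomp Require Import all_boot all_order all_algebra.
From mathcomp Require Import reals.
Set Implicit Arguments. Unset Strict Implicit. Unset Printing Implicit Defensive.
Import Order.TTheory GRing.Theory Num.Theory.
Local Open Scope ring_scope.

Section Defs.
Variable R : realType.

(* the rotation matrix R(w) of a quaternion w = [w1;w2;w3;w4] (indices 0..3) *)
Definition rotq (w : 'cV[R]_4) : 'M[R]_3 :=
  let w1 := w 0 0 in let w2 := w 1 0 in let w3 := w 2 0 in let w4 := w 3 0 in
  \matrix_(i < 3, j < 3) nth 0 (nth [::]
   [:: [:: w1^+2 + w2^+2 - w3^+2 - w4^+2; 2 * (w2*w3 - w1*w4); 2 * (w2*w4 + w1*w3)];
       [:: 2 * (w2*w3 + w1*w4); w1^+2 + w3^+2 - w2^+2 - w4^+2; 2 * (w3*w4 - w1*w2)];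
       [:: 2 * (w2*w4 - w1*w3); 2 * (w3*w4 + w1*w2); w1^+2 + w4^+2 - w2^+2 - w3^+2]] i) j.

Definition qf n (A : 'M[R]_n) (v : 'cV[R]_n) : R := (v^T *m A *m v) 0 0.

Definition sqnorm n (v : 'cV[R]_n) : R := \sum_i v i 0 ^+ 2.
Definition norm2 n (v : 'cV[R]_n) : R := Num.sqrt (sqnorm v).

Definition unit_sphere n (v : 'cV[R]_n) : Prop := sqnorm v = 1.

Definition sym_mx n (A : 'M[R]_n) : Prop := A^T = A.

Definition SO3 (M : 'M[R]_3) : Prop := M^T *m M = 1%:M /\ \det M = 1.

Definition psd n (A : 'M[R]_n) : Prop := sym_mx A /\ forall v, 0 <= qf A v.
Definition pd n (A : 'M[R]_n) : Prop := sym_mx A /\ forall v, v != 0 -> 0 < qf A v.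

(* the eigenvalues of A, counted with multiplicity, sorted nondecreasingly:
   the (unique) sorted s with char_poly A = prod_(x <- s) (X - x); this exists
   for sym_mx real matrices. *)
Definition eigs n (A : 'M[R]_n) : seq R :=
  epsilon (inhabits [::])
    (fun s : seq R => sorted <=%R s /\ char_poly A = \prod_(x <- s) ('X - x%:P)).

Definition lambda_min n (A : 'M[R]_n) : R := nth 0 (eigs A) 0.
Definition lambda_min2 n (A : 'M[R]_n) : R := nth 0 (eigs A) 1.
Definition lambda_max n (A : 'M[R]_n) : R := last 0 (eigs A).

Definition tlsq_obj l (Q : 'I_l -> 'M[R]_4) (c2 : 'I_l -> R) (w : 'cV[R]_4) : R :=
  \sum_i Num.min (qf (Q i) w) (c2 i).

End Defs.

(* Main.v *)
Require Import Defs.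
From mathcomp Require Import all_boot all_order all_algebra.
From mathcomp Require Import reals.
From Stdlib Require Import ClassicalEpsilon.
From mathcomp Require Import complex ring lra.
Import Order.TTheory GRing.Theory Num.Theory.
Local Open Scope ring_scope.

Module SpecAux.
Import Num.Def.
Local Open Scope sesquilinear_scope.
Set Implicit Arguments. Unset Strict Implicit. Unset Printing Implicit Defensive.
Lemma char_poly_conj (F : comUnitRingType) n (P B : 'M[F]_n) :
  P \in unitmx -> char_poly (invmx P *m B *m P) = char_poly B.
Proof.
move=> Pu; rewrite /char_poly /char_poly_mx.
set mP := map_mx polyC P; set mPi := map_mx polyC (invmx P).
have e1 : mPi *m mP = 1%:M by rewrite -map_mxM mulVmx // map_mx1.
have e2 : mP *m mPi = 1%:M by apply: mulmx1C.
have eX : ('X%:M : 'M_n) = mPi *m 'X%:M *m mP.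
  by rewrite -mulmxA -scalar_mxC mulmxA e1 mul1mx.
rewrite {1}eX !map_mxM -/mP -/mPi -mulmxBl -mulmxBr !det_mulmx mulrC mulrA.
by rewrite -det_mulmx e2 det1 mul1r.
Qed.

Section Spec.
Variable R : realType.
Local Notation C := (complex R).
Variables (n : nat) (A : 'M[R]_n) (hA : A^T = A).
Let Ac : 'M[C]_n := map_mx (real_complex R) A.

Lemma Ac_herm : Ac \is hermsymmx.
Proof.
apply/is_hermitianmxP; rewrite expr0 scale1r; apply/matrixP=> i j; rewrite !mxE.
have -> : A j i = A i j by rewrite -{1}hA mxE.
by rewrite conj_Creal // complex_real.
Qed.

Let P := spectralmx Ac.
Let D := spectral_diag Ac.
Let HAc : Ac = invmx P *m diag_mx D *m P.
Proof. exact/orthomx_spectralP/hermitian_normalmx/Ac_herm. Qed.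
Let r (k : 'I_n) : R := complex.Re (D 0 k).
Let HD k : D 0 k = ((r k)%:C)%C.
Proof.
have := hermitian_spectral_diag_real Ac_herm => /mxOverP /(_ 0 k).
rewrite /r; case: (D 0 k) => a b; rewrite complex_real => /eqP -> //.
Qed.

Lemma char_A : char_poly A = \prod_(k < n) ('X - (r k)%:P).
Proof.
apply: (map_poly_inj (real_complex R)).
rewrite map_char_poly -/Ac HAc char_poly_conj ?spectral_unit //.
rewrite char_poly_trig ?diag_mx_is_trig // rmorph_prod.
apply: eq_bigr => k _; rewrite /= map_polyXsubC mxE eqxx mulr1n HD //.
Qed.

Lemma eigsP : sorted <=%R (eigs A) /\ char_poly A = \prod_(x <- eigs A) ('X - x%:P).
Proof.
rewrite /eigs; apply: (epsilon_spec (inhabits [::]) (fun s : seq R => sorted <=%R s /\ char_poly A = \prod_(x <- s) ('X - x%:P))).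
exists (sort <=%R [seq r k | k <- enum 'I_n]); split.
  exact: (sort_sorted (@le_total _ R)).
have hp : perm_eq (sort <=%R [seq r k | k <- enum 'I_n]) [seq r k | k <- enum 'I_n] by rewrite perm_sort.
rewrite char_A (perm_big _ hp) /= big_map big_enum //.
Qed.

Lemma eigs_perm : perm_eq (eigs A) [seq r k | k <- enum 'I_n].
Proof.
apply: prod_XsubC_eq; rewrite -(proj2 eigsP) char_A big_map big_enum //.
Qed.

Lemma r_in k : r k \in eigs A.
Proof. by rewrite (perm_mem eigs_perm); apply: map_f; rewrite mem_enum. Qed.

Local Notation f := (real_complex R).

Lemma qfC (v : 'cV[R]_n) :
  let y := P *m map_mx f v in
  f (qf A v) = \sum_k ((r k)%:C)%C * ((y k 0)^* * y k 0) /\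
  f (sqnorm v) = \sum_k ((y k 0)^* * y k 0).
Proof.
move=> y.
have Pu : P \is unitarymx by exact: spectral_unitarymx.
have PtP : (P ^t conjC) *m P = 1%:M by apply: mulmx1C; apply/unitarymxP.
set vc := map_mx f v.
have vcT : vc^T *m P ^t conjC = y ^t conjC.
  rewrite /y trmx_mul map_mxM; congr (_ *m _).
  by apply/matrixP => i j; rewrite !mxE; symmetry; apply/CrealP; rewrite complex_real.
split.
  have -> : f (qf A v) = (vc^T *m Ac *m vc) 0 0.
    by rewrite /vc /Ac map_trmx -!map_mxM mxE.
  rewrite HAc invmx_unitary // !mulmxA vcT -[_ *m P *m vc]mulmxA -/y.
  clearbody y; rewrite mul_mx_diag mxE.
  apply: eq_bigr => k _; rewrite !mxE HD; ring.
have -> : f (sqnorm v) = (vc^T *m vc) 0 0.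
  rewrite /sqnorm mxE rmorph_sum; apply: eq_bigr => k _.
  by rewrite !mxE rmorphXn expr2.
rewrite -(mulmx1 vc^T) -PtP !mulmxA vcT -mulmxA -/y; clearbody y; rewrite mxE.
by apply: eq_bigr => k _; rewrite !mxE.
Qed.

Lemma qf_ge m : (forall x, x \in eigs A -> m <= x) ->
  forall v, m * sqnorm v <= qf A v.
Proof.
move=> hm v; have [h1 h2] := qfC v.
rewrite -lecR.
have -> : ((m * sqnorm v)%:C)%C = (m%:C)%C * ((sqnorm v)%:C)%C by rewrite rmorphM.
rewrite h1 h2 mulr_sumr; apply: ler_sum => k _.
apply: ler_wpM2r; first by rewrite mulrC mul_conjC_ge0.
by rewrite lecR hm // r_in.
Qed.

Lemma qf_le M : (forall x, x \in eigs A -> x <= M) ->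
  forall v, qf A v <= M * sqnorm v.
Proof.
move=> hm v; have [h1 h2] := qfC v.
rewrite -lecR.
have -> : ((M * sqnorm v)%:C)%C = (M%:C)%C * ((sqnorm v)%:C)%C by rewrite rmorphM.
rewrite h1 h2 mulr_sumr; apply: ler_sum => k _.
apply: ler_wpM2r; first by rewrite mulrC mul_conjC_ge0.
by rewrite lecR hm // r_in.
Qed.

Lemma eig_vec x : x \in eigs A -> exists2 v : 'cV[R]_n, v != 0 & A *m v = x *: v.
Proof.
move=> hx; have : eigenvalue A x.
  by rewrite eigenvalue_root_char (proj2 eigsP) root_prod_XsubC.
case/eigenvalueP => u hu u0; exists u^T; first by rewrite trmx_eq0.
by rewrite -{1}hA -trmx_mul hu linearZ.
Qed.
End Spec.

End SpecAux.

Module HAux.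
Set Implicit Arguments. Unset Strict Implicit. Unset Printing Implicit Defensive.
Section H.
Variable R : realType.

Lemma sorted_min (s : seq R) x : sorted <=%R s -> x \in s -> nth 0 s 0 <= x.
Proof.
move=> ss xs; rewrite -(nth_index 0 xs).
apply: (sorted_leq_nth le_trans lexx) => //; rewrite inE.
  by case: s xs {ss} => //.
by rewrite index_mem.
Qed.

Lemma sorted_max (s : seq R) x : sorted <=%R s -> x \in s -> x <= last 0 s.
Proof.
move=> ss xs; rewrite -(nth_index 0 xs) -nth_last.
have hs : (0 < size s)%N by case: s xs {ss}.
apply: (sorted_leq_nth le_trans lexx) => //; rewrite ?inE ?index_mem //.
  by rewrite prednK.
by rewrite -ltnS prednK // index_mem.
Qed.

Lemma qfD n (A B : 'M[R]_n) v : qf (A + B) v = qf A v + qf B v.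
Proof. by rewrite /qf mulmxDr mulmxDl mxE. Qed.
Lemma qfZ n (A : 'M[R]_n) a v : qf (a *: A) v = a * qf A v.
Proof. by rewrite /qf -scalemxAr -scalemxAl mxE. Qed.
Lemma qfN n (A : 'M[R]_n) v : qf (- A) v = - qf A v.
Proof. by rewrite -scaleN1r qfZ mulN1r. Qed.
Lemma qfB n (A B : 'M[R]_n) v : qf (A - B) v = qf A v - qf B v.
Proof. by rewrite qfD qfN. Qed.
Lemma qf0 n (v : 'cV[R]_n) : qf 0 v = 0.
Proof. by rewrite /qf mulmx0 mul0mx mxE. Qed.
Lemma qf_sum n I (r : seq I) (P : pred I) (F : I -> 'M[R]_n) v :
  qf (\sum_(i <- r | P i) F i) v = \sum_(i <- r | P i) qf (F i) v.
Proof. by elim/big_rec2: _ => [|i x y _ <-]; rewrite ?qf0 ?qfD. Qed.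
Lemma qf1 n (v : 'cV[R]_n) : qf 1%:M v = sqnorm v.
Proof.
rewrite /qf mulmx1 /sqnorm mxE; apply: eq_bigr => i _; by rewrite mxE expr2.
Qed.
Lemma qf_mul m n (A : 'M[R]_n) (M : 'M[R]_(n, m)) u :
  qf (M^T *m A *m M) u = qf A (M *m u).
Proof. by rewrite /qf trmx_mul !mulmxA. Qed.
Lemma qf_scale n (A : 'M[R]_n) a v : qf A (a *: v) = a ^+ 2 * qf A v.
Proof.
rewrite /qf (_ : (a *: v)^T = a *: v^T); last by apply/matrixP=> i j; rewrite !mxE.
by rewrite -!scalemxAl -scalemxAr !mxE mulrA -expr2.
Qed.
Lemma sqnorm_ge0 n (v : 'cV[R]_n) : 0 <= sqnorm v.
Proof. by rewrite /sqnorm sumr_ge0 // => i _; rewrite sqr_ge0. Qed.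
Lemma sqnorm_eq0 n (v : 'cV[R]_n) : sqnorm v = 0 -> v = 0.
Proof.
move/eqP; rewrite /sqnorm psumr_eq0 => [/allP h|i _]; last by rewrite sqr_ge0.
apply/matrixP => i j; rewrite (ord1 j) mxE; apply/eqP; rewrite -sqrf_eq0.
by apply: (implyP (h i (mem_index_enum _))).
Qed.
Lemma sqnorm_gt0 n (v : 'cV[R]_n) : v != 0 -> 0 < sqnorm v.
Proof.
move=> v0; rewrite lt_neqAle sqnorm_ge0 andbT eq_sym; apply/eqP => /sqnorm_eq0.
by move/eqP: v0.
Qed.

Definition bil n (A : 'M[R]_n) (v w : 'cV[R]_n) := (v^T *m A *m w) 0 0.

Lemma qf_add n (A : 'M[R]_n) v w : A^T = A ->
  qf A (v + w) = qf A v + 2 * bil A v w + qf A w.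
Proof.
move=> hA; rewrite /qf /bil (_ : (v + w)^T = v^T + w^T); last by apply/matrixP=> i j; rewrite !mxE.
have e : w^T *m A *m v = v^T *m A *m w.
  apply/matrixP => i j; rewrite (ord1 i) (ord1 j).
  transitivity ((w^T *m A *m v)^T 0 0); first by rewrite [RHS]mxE.
  by rewrite trmx_mul trmx_mul trmxK hA mulmxA.
rewrite !mulmxDl !mulmxDr e.
move: (v^T *m A *m v) (v^T *m A *m w) (w^T *m A *m w) => X Y Z.
rewrite !mxE.
ring.
Qed.
Lemma bilZ n (A : 'M[R]_n) a v w : bil A (a *: v) w = a * bil A v w.
Proof.
rewrite /bil (_ : (a *: v)^T = a *: v^T); last by apply/matrixP=> i j; rewrite !mxE.
by rewrite -!scalemxAl mxE.
Qed.

Lemma sphere_ext (B : 'M[R]_4) c :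
  (forall w, unit_sphere w -> c <= qf B w) -> forall w, c * sqnorm w <= qf B w.
Proof.
move=> h w; have [->|w0] := eqVneq w 0.
  by rewrite /sqnorm big1 ?mulr0 /qf ?mulmx0 ?mxE // => i _; rewrite mxE expr0n.
have sp := sqnorm_gt0 w0; set s := Num.sqrt (sqnorm w).
have s0 : 0 < s by rewrite sqrtr_gt0.
have us : unit_sphere (s^-1 *: w).
  rewrite /unit_sphere -qf1 qf_scale qf1 exprVn sqr_sqrtr ?mulVf //; last exact: ltW.
  by rewrite gt_eqF.
have := h _ us; rewrite qf_scale exprVn sqr_sqrtr; last exact: ltW.
by rewrite ler_pdivlMl // mulrC.
Qed.

Lemma psd_null n (B : 'M[R]_n) w : B^T = B -> (forall v, 0 <= qf B v) ->
  qf B w = 0 -> B *m w = 0.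
Proof.
move=> hB hpsd hw; set u := B *m w.
have hb : bil B u w = sqnorm u.
  by rewrite /bil -mulmxA -/u -qf1 /qf mulmx1.
set b := sqnorm u; set c := qf B u.
have c0 : 0 <= c by apply: hpsd.
set t := - b / (c + 1).
have ht : t * (c + 1) = - b by rewrite /t mulfVK // gt_eqF // ltr_wpDl.
have := hpsd (t *: u + w); rewrite qf_add // qf_scale hw addr0 bilZ hb -/c -/b.
have b0 : 0 <= b by apply: sqnorm_ge0.
move=> h; have : b = 0 by nra.
by move/sqnorm_eq0.
Qed.

Lemma cs_bound n (p z : 'cV[R]_n) s :
  2 * s * (p^T *m z) 0 0 <= norm2 z * (sqnorm p + s ^+ 2).
Proof.
set N := norm2 z.
have N0 : 0 <= N by apply: sqrtr_ge0.
have NN : N ^+ 2 = sqnorm z by rewrite sqr_sqrtr // sqnorm_ge0.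
have [N0'|Np] := eqVneq N 0.
  have z0 : z = 0 by apply: sqnorm_eq0; rewrite -NN N0' expr0n.
  rewrite z0 mulmx0 mxE N0' mul0r mulr0 //.
have Np' : 0 < N by rewrite lt_neqAle eq_sym Np.
have := sqnorm_ge0 (N *: p + (- s) *: z).
rewrite -qf1 qf_add ?tr_scalar_mx // !qf_scale bilZ /bil mulmx1 -scalemxAr mxE.
rewrite !qf1 -NN => h.
have : 0 <= N * (N * sqnorm p - 2 * s * (p^T *m z) 0 0 + N * s ^+ 2).
  move: h; set X := (p^T *m z) 0 0; set Y := sqnorm p.
  have -> : (- s) ^+ 2 = s ^+ 2 by rewrite sqrrN.
  move=> h; nra.
rewrite pmulr_rge0 // => h2; nra.
Qed.

Lemma char_poly_conj' (F : comUnitRingType) n (P Pi B : 'M[F]_n) :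
  Pi *m P = 1%:M -> char_poly (Pi *m B *m P) = char_poly B.
Proof.
move=> PiP; rewrite /char_poly /char_poly_mx.
set mP := map_mx polyC P; set mPi := map_mx polyC Pi.
have e1 : mPi *m mP = 1%:M by rewrite -map_mxM PiP map_mx1.
have e2 : mP *m mPi = 1%:M by apply: mulmx1C.
have eX : ('X%:M : 'M_n) = mPi *m 'X%:M *m mP.
  by rewrite -mulmxA -scalar_mxC mulmxA e1 mul1mx.
rewrite {1}eX !map_mxM -/mP -/mPi -mulmxBl -mulmxBr !det_mulmx mulrC mulrA.
by rewrite -det_mulmx e2 det1 mul1r.
Qed.
End H.

End HAux.
Import SpecAux HAux.
Unset Implicit Arguments. Set Strict Implicit. Set Printing Implicit Defensive.

Theorem lemma3p8 (R : realType) (l : nat) (hl : (2 <= l)%N)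
  (R0 : 'M[R]_3) (hR0 : SO3 R0)
  (y x eps : 'I_l -> 'cV[R]_3) (hyx : forall i, y i = R0 *m x i + eps i)
  (Q : 'I_l -> 'M[R]_4)
  (hQsym : forall i, sym_mx (Q i))
  (hQ : forall i (w : 'cV[R]_4), unit_sphere w ->
          qf (Q i) w = sqnorm (y i - rotq w *m x i))
  (c2 : 'I_l -> R) (hc2 : forall i, 0 <= c2 i)
  (w0 : 'cV[R]_4) (hw0 : unit_sphere w0)
  (hmin : forall w : 'cV[R]_4, unit_sphere w -> tlsq_obj Q c2 w0 <= tlsq_obj Q c2 w) :
  let zeta := lambda_min2 (\sum_i Q i) / lambda_min (\sum_i Q i) in
  let avg := (\sum_k qf (Q k) w0) / l%:R in
  let d := fun i => avg - qf (Q i) w0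
              + lambda_max (\sum_(j | j != i) (Q i - Q j)) / (zeta * (l%:R - 1)) in
  l%:R / (l%:R - 1) <= zeta ->
  (forall i, qf (Q i) w0 + norm2 (Q i *m w0) + (`|d i| + d i) / 2 < c2 i) ->
  forall V0 : 'M[R]_(4, 3), V0^T *m w0 = 0 -> V0^T *m V0 = 1%:M ->
  let V : 'M[R]_4 := row_mx V0 w0 in
  let T := fun i => ((zeta - l%:R / (l%:R - 1)) / zeta) *: (V0^T *m Q i *m V0)
              + (zeta * (l%:R - 1))^-1 *: (\sum_j V0^T *m Q j *m V0)
              - avg *: (1%:M : 'M[R]_3) in
  let S := fun i => V *m (block_mx (T i) 0 0 (0 : 'M[R]_1) : 'M[R]_4) *m V^T in
  [/\ \sum_i S i = \sum_i (Q i - qf (Q i) w0 *: 1%:M),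
      forall i, psd (S i)
    & forall i, pd (S i + c2 i *: 1%:M - Q i)].
Proof.
move=> zeta avg d hzeta hc V0 hV0w hV0 V T S.
set A := \sum_i Q i.
set mu := \sum_k qf (Q k) w0.
have l0 : (2%:R <= l%:R :> R) by rewrite ler_nat.
have hsymA : A^T = A.
  by rewrite /A linear_sum; apply: eq_bigr => i _; apply: hQsym.
have hQpsd : forall i w, 0 <= qf (Q i) w.
  move=> i w; rewrite -(mul0r (sqnorm w)); apply: sphere_ext => u hu.
  by rewrite hQ // sqnorm_ge0.
have hqc : forall i, qf (Q i) w0 < c2 i.
  move=> i; apply: le_lt_trans (hc i); rewrite -addrA lerDl addr_ge0 //.
    exact: sqrtr_ge0.
  apply: divr_ge0 => //; have := ler_norm (- d i); rewrite normrN => h; lra.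
have hmu0 : 0 <= mu by apply: sumr_ge0 => k _.
have hqfA : forall w, qf A w = \sum_i qf (Q i) w by move=> w; rewrite qf_sum.
have hmuA : forall w, mu * sqnorm w <= qf A w.
  apply: sphere_ext => w hw; have := hmin w hw.
  have -> : tlsq_obj Q c2 w0 = mu.
    by rewrite /tlsq_obj; apply: eq_bigr => i _; rewrite min_l // ltW.
  move=> h; apply: (le_trans h); rewrite hqfA /tlsq_obj; apply: ler_sum => i _.
  by rewrite ge_min lexx.
have hw01 : w0^T *m w0 = 1%:M.
  have : qf 1%:M w0 = 1 by rewrite qf1.
  rewrite /qf mulmx1 => h; apply/matrixP => i j.
  by rewrite (ord1 i) (ord1 j) h mxE.
have hw0V0 : w0^T *m V0 = 0.
  by have := congr1 trmx hV0w; rewrite trmx_mul trmxK trmx0.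
have hVV : V^T *m V = 1%:M.
  change ((row_mx V0 w0 : 'M_(4, 3 + 1))^T *m (row_mx V0 w0 : 'M_(4, 3 + 1)) = (1%:M : 'M_(3 + 1))).
  rewrite tr_row_mx mul_col_row hV0 hV0w hw0V0 hw01.
  by rewrite scalar_mx_block.
have hVV' : V *m V^T = 1%:M by apply: mulmx1C.
have hPi : V0 *m V0^T + w0 *m w0^T = 1%:M.
  have h := hVV'.
  change ((row_mx V0 w0 : 'M_(4, 3 + 1)) *m (row_mx V0 w0 : 'M_(4, 3 + 1))^T = 1%:M) in h.
  by rewrite tr_row_mx mul_row_col in h.
have hAw : A *m w0 = mu *: w0.
  have hB : (A - mu%:M)^T = A - mu%:M by rewrite linearB /= hsymA tr_scalar_mx.
  have hqB : forall v, qf (A - mu%:M) v = qf A v - mu * sqnorm v.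
    by move=> v; rewrite qfB -scalemx1 qfZ qf1.
  have h := psd_null hB.
  apply/eqP; rewrite -subr_eq0 -mul_scalar_mx -mulmxBl; apply/eqP; apply: h.
    by move=> v; rewrite hqB subr_ge0.
  by rewrite hqB hqfA hw0 mulr1 subrr.
have hwA : w0^T *m A = mu *: w0^T.
  by have := congr1 trmx hAw; rewrite trmx_mul hsymA linearZ.
set B3 := V0^T *m A *m V0.
have hB3sym : B3^T = B3 by rewrite /B3 !trmx_mul trmxK hsymA mulmxA.
have hsqV0 : forall u, sqnorm (V0 *m u) = sqnorm u.
  by move=> u; rewrite -qf1 -qf_mul mulmx1 hV0 qf1.
have hblock : V^T *m A *m V = block_mx B3 0 0 mu%:M.
  change ((row_mx V0 w0 : 'M_(4, 3 + 1))^T *m A *m (row_mx V0 w0 : 'M_(4, 3 + 1)) = block_mx B3 0 0 mu%:M).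
  rewrite tr_row_mx mul_col_mx mul_col_row -!mulmxA hAw -!scalemxAr hV0w hw01.
  by rewrite !mulmxA hwA -!scalemxAl hw0V0 !scaler0 scalemx1.
have hAV : A = V *m (V^T *m A *m V) *m V^T.
  by rewrite !mulmxA hVV' mul1mx -mulmxA hVV' mulmx1.
have hcharA : char_poly A = char_poly B3 * ('X - mu%:P).
  rewrite {1}hAV (char_poly_conj' _ hVV') hblock.
  change (\det (char_poly_mx (block_mx B3 0 0 (mu%:M : 'M_1) : 'M_(3 + 1))) = char_poly B3 * ('X - mu%:P)).
  rewrite char_block_diag_mx det_ublock; congr (_ * _).
  by rewrite det_mx11 !mxE eqxx mulr1n.
have hB3ge : forall x, x \in eigs B3 -> mu <= x.
  move=> z hz; have [u u0 hu] := eig_vec hB3sym hz.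
  have h1 : qf B3 u = z * sqnorm u.
    by rewrite /qf -mulmxA hu -scalemxAr mxE -qf1 /qf mulmx1.
  have : mu * sqnorm u <= z * sqnorm u.
    by rewrite -h1 /B3 qf_mul -(hsqV0 u) hmuA.
  by rewrite ler_pM2r // sqnorm_gt0.
have heigsA : eigs A = mu :: eigs B3.
  have [sA pA] := eigsP hsymA; have [sB pB] := eigsP hB3sym.
  apply: le_sorted_eq => //.
    rewrite /= (path_sortedE le_trans) sB andbT; apply/allP => z hz.
    exact: hB3ge.
  apply: prod_XsubC_eq; rewrite -pA hcharA pB big_cons mulrC //.
have hlmin : lambda_min A = mu by rewrite /lambda_min heigsA.
set beta := nth 0 (eigs B3) 0.
have hlmin2 : lambda_min2 A = beta by rewrite /lambda_min2 heigsA.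
have hz : zeta = beta / mu by rewrite /zeta -/A hlmin hlmin2.
have l1 : 0 < l%:R - 1 :> R by lra.
have lpos : 0 < l%:R :> R by lra.
have hzpos : 0 < zeta.
  by apply: lt_le_trans hzeta; rewrite divr_gt0.
have hmupos : 0 < mu.
  rewrite lt_neqAle hmu0 andbT eq_sym; apply/eqP => mu0.
  by move: hzpos; rewrite hz mu0 invr0 mulr0 ltxx.
have hbeta : beta = zeta * mu by rewrite hz mulfVK // gt_eqF.
have hB3beta : forall u, beta * sqnorm u <= qf B3 u.
  apply: qf_ge => // z hz'; apply: sorted_min hz'; exact: (proj1 (eigsP hB3sym)).
have hB3sum : \sum_j V0^T *m Q j *m V0 = B3.
  by rewrite /B3 /A mulmx_sumr mulmx_suml.
have hS : forall i, S i = V0 *m T i *m V0^T.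
  move=> i; rewrite /S.
  change ((row_mx V0 w0 : 'M_(4, 3 + 1)) *m block_mx (T i) 0 0 (0 : 'M_1) *m (row_mx V0 w0 : 'M_(4, 3 + 1))^T = V0 *m T i *m V0^T).
  by rewrite mul_row_block !mulmx0 !addr0 tr_row_mx mul_row_col mul0mx addr0.
set a := (zeta - l%:R / (l%:R - 1)) / zeta.
set b := (zeta * (l%:R - 1))^-1.
have hab : a + b *+ l = 1.
  rewrite /a /b -mulr_natl; field.
  by rewrite (gt_eqF hzpos) (gt_eqF l1).
have havg : avg *+ l = mu by rewrite /avg -mulr_natr mulfVK // gt_eqF.
set W := w0 *m w0^T.
have hPi' : V0 *m V0^T = 1%:M - W by rewrite -hPi addrK.
have hTsym : forall i, (T i)^T = T i.
  move=> i; rewrite /T linearB linearD !linearZ /= linear_sum /= trmx1.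
  rewrite trmx_mul trmx_mul trmxK (hQsym i) mulmxA scalerN.
  rewrite (eq_bigr (fun j => V0^T *m Q j *m V0)) // => j _.
  by rewrite trmx_mul trmx_mul trmxK (hQsym j) mulmxA.
have hSsym : forall i, (S i)^T = S i.
  by move=> i; rewrite hS !trmx_mul trmxK hTsym mulmxA.
have hqS : forall i v, qf (S i) v = qf (T i) (V0^T *m v).
  by move=> i v; rewrite hS -qf_mul trmxK.
have hqT : forall i u, qf (T i) u =
    a * qf (Q i) (V0 *m u) + b * qf A (V0 *m u) - avg * sqnorm u.
  move=> i u; rewrite /T qfB qfD !qfZ hB3sum qf1 /B3 !qf_mul //.
have ha0 : 0 <= a by rewrite /a divr_ge0 ?subr_ge0 // ltW.
have hb0 : 0 < b by rewrite /b invr_gt0 mulr_gt0.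
have hbb : avg <= b * beta.
  have -> : b * beta = mu / (l%:R - 1).
    rewrite /b hbeta; field; by rewrite (gt_eqF hzpos) (gt_eqF l1).
  rewrite /avg -/mu; apply: ler_wpM2l => //; rewrite lef_pV2 ?posrE //; lra.
have hqA : forall u, beta * sqnorm u <= qf A (V0 *m u).
  by move=> u; rewrite -qf_mul; exact: hB3beta.
split.
- rewrite (eq_bigr _ (fun i _ => hS i)) -mulmx_suml -mulmx_sumr.
  have -> : \sum_i T i = B3 - mu *: 1%:M.
    rewrite /T sumrB big_split -scaler_sumr hB3sum !sumr_const card_ord.
    rewrite /= -/a -/b !scalerMnl -scalerDl hab scale1r havg //.
  have e1 : V0 *m B3 *m V0^T = (1%:M - W) *m A *m (1%:M - W) by rewrite -hPi' /B3 !mulmxA.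
  have e2 : V0 *m (mu *: 1%:M) *m V0^T = mu *: (1%:M - W) by rewrite -hPi' -scalemxAr mulmx1 scalemxAl.
  have e3 : \sum_i (Q i - qf (Q i) w0 *: 1%:M) = A - mu *: 1%:M.
    by rewrite big_split /= sumrN -scaler_suml.
  have WA : W *m A = mu *: W by rewrite /W -mulmxA hwA -scalemxAr.
  have AW : A *m W = mu *: W by rewrite /W mulmxA hAw -scalemxAl.
  have WW : W *m W = W by rewrite /W mulmxA -(mulmxA w0) hw01 mulmx1.
  rewrite mulmxBr mulmxBl e1 e2 e3.
  rewrite mulmxBl mul1mx WA mulmxBr mulmx1 mulmxBl AW -scalemxAl WW subrr subr0.
  by rewrite scalerBr opprB addrA subrK.
- move=> i; split; first exact: (hSsym i).
  move=> v; rewrite hqS hqT; set u := V0^T *m v.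
  have h1 := hqA u; have h2 := hQpsd i (V0 *m u); have h3 := sqnorm_ge0 u.
  have h4 : b * (beta * sqnorm u) <= b * qf A (V0 *m u) by rewrite ler_wpM2l // ltW.
  have h5 : avg * sqnorm u <= b * beta * sqnorm u by rewrite ler_wpM2r.
  have h6 : 0 <= a * qf (Q i) (V0 *m u) by rewrite mulr_ge0.
  rewrite mulrA in h4; lra.
move=> i; split.
  rewrite /sym_mx linearB linearD linearZ /= hSsym trmx1.
  by rewrite (hQsym i).
move=> v v0.
rewrite qfB qfD qfZ qf1 hqS hqT.
set u := V0^T *m v; set s := (w0^T *m v) 0 0; set p := V0 *m u.
set lam := lambda_max (\sum_(j | j != i) (Q i - Q j)).
have hpw : p^T *m w0 = 0 by rewrite /p trmx_mul -mulmxA hV0w mulmx0.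
have hv : v = p + s *: w0.
  rewrite /p /u /s -{1}(mul1mx v) -hPi mulmxDl -!mulmxA.
  by rewrite -mul_mx_scalar -mx11_scalar.
have hsp : sqnorm p = sqnorm u by rewrite hsqV0.
have hsqv : sqnorm v = sqnorm u + s ^+ 2.
  rewrite hv -qf1 qf_add ?trmx1 // qf_scale !qf1 hw0 mulr1 hsp.
  rewrite /bil mulmx1 -scalemxAr hpw scaler0 mxE mulr0 addr0 //.
have hqQ : qf (Q i) v = qf (Q i) p + 2 * s * (p^T *m (Q i *m w0)) 0 0
    + s ^+ 2 * qf (Q i) w0.
  rewrite hv qf_add ?(hQsym i) // qf_scale /bil -scalemxAr mxE mulmxA.
  by rewrite mulrA (mulrC 2).
have hMsym : (\sum_(j | j != i) (Q i - Q j))^T = \sum_(j | j != i) (Q i - Q j).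
  rewrite linear_sum; apply: eq_bigr => j _.
  by rewrite linearB /= (hQsym i) (hQsym j).
have hqM : qf (\sum_(j | j != i) (Q i - Q j)) p <= lam * sqnorm p.
  apply: qf_le => // z hz0; apply: sorted_max hz0; exact: (proj1 (eigsP hMsym)).
have hqMe : qf (\sum_(j | j != i) (Q i - Q j)) p =
    l%:R * qf (Q i) p - qf A p.
  rewrite qf_sum hqfA [X in _ = _ - X](bigD1 i) //=.
  rewrite (eq_bigr (fun j => qf (Q i) p - qf (Q j) p)) => [|j _]; last by rewrite qfB.
  rewrite sumrB sumr_const cardC1 card_ord.
  have -> : (l%:R : R) = (l.-1)%:R + 1 by rewrite natr1 prednK // ltnW.
  rewrite -mulr_natl; lra.
have hcs := cs_bound p (Q i *m w0) s.
set nz := norm2 (Q i *m w0).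
set X := (p^T *m (Q i *m w0)) 0 0.
have hci := hc i; rewrite /d -/b in hci.
have hdd : d i = avg - qf (Q i) w0 + lam * b by [].
have hnz0 : 0 <= nz by apply: sqrtr_ge0.
have ha : a = 1 - b *+ l by rewrite -hab addrK.
have hbq : b * qf (\sum_(j | j != i) (Q i - Q j)) p <= b * lam * sqnorm p.
  by rewrite -mulrA ler_wpM2l // ltW.
rewrite hqMe in hbq.
have hvpos : 0 < sqnorm u + s ^+ 2 by rewrite -hsqv sqnorm_gt0.
rewrite hsqv hqQ ha.
move: hci hbq hcs; rewrite -/X -/nz hsp.
set q := qf (Q i) w0; set qQ := qf (Q i) p; set qA := qf A p.
set U := sqnorm u; set K := b * lam.
rewrite -[b *+ l]mulr_natl -/lam (mulrC lam b) -/K.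
set E := avg - q + K.
have hE1 := ler_norm E; have hE2 := ler_norm (- E); rewrite normrN in hE2.
move=> hci hbq hcs.
have pos1 : 0 < c2 i - avg - K - nz by rewrite /E in hE1 hE2 hci; lra.
have pos2 : 0 < c2 i - q - nz by rewrite /E in hE1 hE2 hci; lra.
have hU : 0 <= U by apply: sqnorm_ge0.
have hs2 : 0 <= s ^+ 2 by apply: sqr_ge0.
have : 0 < (c2 i - avg - K - nz) * U + (c2 i - q - nz) * s ^+ 2.
  have [U0|U0] := eqVneq U 0.
    rewrite U0 mulr0 add0r; apply: mulr_gt0 => //.
    by rewrite -/U U0 add0r in hvpos.
  have Up : 0 < U by rewrite lt_neqAle eq_sym U0 hU.
  have := mulr_gt0 pos1 Up; have := mulr_ge0 (ltW pos2) hs2; lra.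
move=> h; nra.
Qed.
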